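(* Let $s=a_1^{m_1}\cdots a_r^{m_r}$ and $t=a_1^{m'_1}\cdots a_r^{m'_r}$ be run-length encodings of two non-empty strings with the same run symbols $a_1,\dots,a_r$ (and $m_i,m'_i\ge1$), and let $D=\{i: m_i\ne m'_i\}$. Write $\mathcal{F}(s)=[\tau_0,\dots,\tau_{k-1}]$ and $\mathcal{F}(t)=[\tau'_0,\dots,\tau'_{k-1}]$ (both have the same length $k$). Then the set of indices $d$ with $\tau_d\ne\tau'_d$ is exactly $\{\min(i,r+1-i): i\in D\}$. In particular, if $s$ and $t$ differ in a single run length $m_i$, then exactly one token differs, namely the one at index $\min(i,r+1-i)$.
   Context: Let $\Sigma$ be an alphabet and $\texttt{@},\texttt{\$}$ two distinct symbols not in $\Sigma$. The run-length encoding of a non-empty string is the unique decomposition $a_1^{m_1}\cdots a_r^{m_r}$ with $a_i\in\Sigma$, $m_i\ge1$, $a_i\ne a_{i+1}$ ($a^m$ is $a$ repeated $m$ times). For $s$ with $|s|=n$ let $\hat s=\texttt{@}\,s\,\texttt{\$}$ (positions $1,\dots,n+2$); $\hat s[i..j)$ is the substring at positions $i,\dots,j-1$. The leading (trailing) run of a non-empty string is its longest prefix (suffix) consisting of one repeated symbol. The Flashback decomposition $\mathcal{F}(s)$ is the sequence of tokens $(\sigma,p)$ (symbol string $\sigma$, integer split position $p\ge0$) produced as follows, starting from active span $[lo,hi)=[1,n+3)$: if $lo\ge hi$, stop. Let $\ell$ be the leading-run length of $\hat s[lo..hi)$. If $\ell=hi-lo$, append $(\hat s[lo..hi),0)$ and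 stop. Otherwise let $\hat s[r'..hi)$ be the trailing run of $\hat s[lo..hi)$ and $\sigma=\hat s[lo..lo+\ell)\cdot\hat s[r'..hi)$; if $lo+\ell\ge r'$, append $(\sigma,0)$ and stop; otherwise append $(\sigma,\ell)$ and repeat with $[lo+\ell,r')$. Tokens are indexed $\tau_0,\tau_1,\dots$ in order of emission. *)

(* Defs.v *)
From mathcomp Require Import all_boot.
Set Implicit Arguments. Unset Strict Implicit. Unset Printing Implicit Defensive.

(* Extended alphabet Sigma ∪ {@, $}: @ = None, $ = Some None, a = Some (Some a). *)
Definition hsym (S : eqType) := option (option S).
Definition sym_at {S : eqType} : hsym S := None.
Definition sym_dollar {S : eqType} : hsym S := Some None.
Definition sym {S : eqType} (a : S) : hsym S := Some (Some a).

Definition shat {S : eqType} (s : seq S) : seq (hsym S) :=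
  sym_at :: rcons (map sym s) sym_dollar.

(* w[i..j) with 1-based positions i,...,j-1 *)
Definition substr {X : Type} (w : seq X) (i j : nat) : seq X :=
  take (j - i) (drop i.-1 w).

Definition lead_run_len {X : eqType} (w : seq X) : nat :=
  if w is x :: w' then (find (predC1 x) w').+1 else 0.

Definition trail_run_len {X : eqType} (w : seq X) : nat := lead_run_len (rev w).

Definition token (S : eqType) := (seq (hsym S) * nat)%type.

(* one run of the loop on active span [lo,hi) of the full string w,
   with a fuel argument (fuel >= size w + 1 is always enough, since lo
   strictly increases at every iteration). *)
Fixpoint flash_loop {S : eqType} (fuel : nat) (w : seq (hsym S)) (lo hi : nat)
  : seq (token S) :=
  match fuel with
  | 0 => [::]
  | fuel'.+1 =>
    if hi <= lo then [::] else
    let u := substr w lo hi in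
    let l := lead_run_len u in
    if l == hi - lo then [:: (u, 0)] else
    let r' := hi - trail_run_len u in
    let sigma := substr w lo (lo + l) ++ substr w r' hi in
    if r' <= lo + l then [:: (sigma, 0)]
    else (sigma, l) :: flash_loop fuel' w (lo + l) r'
  end.

Definition flashback {S : eqType} (s : seq S) : seq (token S) :=
  flash_loop (size s).+3 (shat s) 1 (size s).+3.

Definition rle_string {S : eqType} (a : seq S) (m : seq nat) : seq S :=
  flatten [seq nseq p.2 p.1 | p <- zip a m].

Definition rle_ok {S : eqType} (a : seq S) (m : seq nat) : Prop :=
  [/\ size m = size a, sorted (fun x y => x != y) a & all (fun k => 0 < k) m].

(* Main.v *)
Require Import Defs.
From mathcomp Require Import all_boot zify.

Definition expr {X : eqType} (b : seq X) (c : seq nat) : seq X :=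
  flatten [seq nseq p.2 p.1 | p <- zip b c].

Lemma expr_cons (X : eqType) (x : X) b k c : expr (x :: b) (k :: c) = nseq k x ++ expr b c.
Proof. by []. Qed.

Lemma expr_rcons (X : eqType) (y : X) b j c : size b = size c ->
  expr (rcons b y) (rcons c j) = expr b c ++ nseq j y.
Proof. by move=> h; rewrite /expr zip_rcons // map_rcons flatten_rcons. Qed.

Lemma last_nseqx (X : Type) (x : X) n : last x (nseq n x) = x.
Proof. by elim: n. Qed.

Lemma lead_nseq (X : eqType) (x : X) k v : 0 < k -> (v == [::]) || (head x v != x) ->
  lead_run_len (nseq k x ++ v) = k.
Proof.
case: k => // k _ h; rewrite /lead_run_len /= find_cat has_nseq /= eqxx andbF size_nseq.
by case: v h => [|z v] /=; [rewrite addn0 | move=> ->; rewrite addn0].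
Qed.

Lemma trail_nseq (X : eqType) (y : X) k v : 0 < k -> (v == [::]) || (last y v != y) ->
  trail_run_len (v ++ nseq k y) = k.
Proof.
move=> hk h; rewrite /trail_run_len rev_cat rev_nseq lead_nseq //.
case/lastP: v h => [|v z] //=; rewrite rev_rcons last_rcons /=.
by case: v => [|? ?].
Qed.

Lemma substrE (X : Type) (w p u q : seq X) i j : w = p ++ u ++ q ->
  i = (size p).+1 -> j = (size p + size u).+1 -> substr w i j = u.
Proof.
move=> -> -> ->; rewrite /substr subSS addKn /=.
by rewrite drop_size_cat // take_size_cat.
Qed.

Lemma flash_S (S : eqType) k (w : seq (hsym S)) lo hi :
  flash_loop k.+1 w lo hi =
    if hi <= lo then [::] else
    if lead_run_len (substr w lo hi) == hi - lo then [:: (substr w lo hi, 0)] else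
    if hi - trail_run_len (substr w lo hi) <= lo + lead_run_len (substr w lo hi)
    then [:: (substr w lo (lo + lead_run_len (substr w lo hi)) ++ substr w (hi - trail_run_len (substr w lo hi)) hi, 0)]
    else (substr w lo (lo + lead_run_len (substr w lo hi)) ++ substr w (hi - trail_run_len (substr w lo hi)) hi, lead_run_len (substr w lo hi))
       :: flash_loop k w (lo + lead_run_len (substr w lo hi)) (hi - trail_run_len (substr w lo hi)).
Proof. by []. Qed.

Lemma flash0 (S : eqType) k (w : seq (hsym S)) lo : flash_loop k w lo lo = [::].
Proof. by case: k => //= k; rewrite leqnn. Qed.

Lemma step1 (S : eqType) k (pre post : seq (hsym S)) x j : 0 < j ->
  flash_loop k.+1 (pre ++ nseq j x ++ post) (size pre).+1 (size pre + size (nseq j x)).+1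
   = [:: (nseq j x, 0)].
Proof.
move=> hj; rewrite flash_S (@substrE _ _ (pre) (nseq j x) (post)) // size_nseq.
have -> : (size pre + j).+1 <= (size pre).+1 = false by lia.
by rewrite -[nseq j x]cats0 lead_nseq // cats0 subSS addKn eqxx.
Qed.

Lemma step2 (S : eqType) k (pre post : seq (hsym S)) x y j1 j2 : x != y -> 0 < j1 -> 0 < j2 ->
  flash_loop k.+1 (pre ++ (nseq j1 x ++ nseq j2 y) ++ post) (size pre).+1
     (size pre + size (nseq j1 x ++ nseq j2 y)).+1
   = [:: (nseq j1 x ++ nseq j2 y, 0)].
Proof.
move=> xy h1 h2; rewrite flash_S (@substrE _ _ (pre) (nseq j1 x ++ nseq j2 y) (post)) //.
rewrite size_cat !size_nseq.
have -> : (size pre + (j1 + j2)).+1 <= (size pre).+1 = false by lia.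
rewrite lead_nseq //; last by case: j2 h2 => //= j2 _; rewrite eq_sym.
have -> : (j1 == (size pre + (j1 + j2)).+1 - (size pre).+1) = false by lia.
rewrite trail_nseq //; last by case: j1 h1 => //= j1 _; rewrite last_nseqx.
have -> : (size pre + (j1 + j2)).+1 - j2 <= (size pre).+1 + j1 by lia.
rewrite (@substrE _ _ (pre) (nseq j1 x) (nseq j2 y ++ post)); [| by rewrite !catA | by [] | by rewrite size_nseq; lia].
rewrite (@substrE _ _ (pre ++ nseq j1 x) (nseq j2 y) (post)) //; [by rewrite !catA | |];
  rewrite size_cat !size_nseq; lia.
Qed.

Lemma step3 (S : eqType) k (pre post u : seq (hsym S)) x y j1 j2 : 0 < j1 -> 0 < j2 ->
  0 < size u -> head x u != x -> last y u != y ->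
  flash_loop k.+1 (pre ++ (nseq j1 x ++ u ++ nseq j2 y) ++ post) (size pre).+1
     (size pre + size (nseq j1 x ++ u ++ nseq j2 y)).+1
   = (nseq j1 x ++ nseq j2 y, j1) :: flash_loop k ((pre ++ nseq j1 x) ++ u ++ (nseq j2 y ++ post))
        (size (pre ++ nseq j1 x)).+1 (size (pre ++ nseq j1 x) + size u).+1.
Proof.
move=> h1 h2 hu hh hl.
rewrite flash_S (@substrE _ _ pre (nseq j1 x ++ u ++ nseq j2 y) post) //.
rewrite !size_cat !size_nseq.
have -> : (size pre + (j1 + (size u + j2))).+1 <= (size pre).+1 = false by lia.
rewrite lead_nseq //; last by case: u hu hh hl.
have -> : (j1 == (size pre + (j1 + (size u + j2))).+1 - (size pre).+1) = false by lia.
rewrite catA trail_nseq //; last first.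
  rewrite last_cat; case: u hu hh hl => //= z u _ _.
  by move=> ->; rewrite orbT.
have ee : ((size pre + (j1 + (size u + j2))).+1 - j2 <= (size pre).+1 + j1) = false.
  apply/negbTE; rewrite -ltnNge. lia.
rewrite ee.
rewrite (@substrE _ _ (pre) (nseq j1 x) (u ++ nseq j2 y ++ post)); [| by rewrite !catA | by [] | by rewrite size_nseq; lia].
rewrite (@substrE _ _ (pre ++ nseq j1 x ++ u) (nseq j2 y) (post)); [| by rewrite !catA | rewrite !size_cat !size_nseq; lia | rewrite !size_cat !size_nseq; lia].
congr (_ :: _); rewrite -!catA; congr flash_loop; lia.
Qed.

Lemma nth_mid (k j : nat) cM i : 1 <= i <= size cM ->
  nth 0 (k :: rcons cM j) i = nth 0 cM i.-1.
Proof.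
case: i => // i /andP[_ h] /=; rewrite nth_rcons.
by have -> : i < size cM by lia.
Qed.

Lemma nth_last (k j : nat) cM : nth 0 (k :: rcons cM j) (size cM).+1 = j.
Proof. by rewrite /= nth_rcons ltnn eqxx. Qed.

Lemma comb (T : Type) (t t' x0 : T) G G' (k j k' j' : nat) cM cM' L :
 size cM = L -> size cM' = L ->
 (t = t' <-> k = k' /\ j = j') ->
 size G = size G' /\ (forall d, (d < size G /\ nth x0 G d <> nth x0 G' d) <->
    exists i, [/\ 1 <= i <= L, nth 0 cM i.-1 <> nth 0 cM' i.-1 & d.+1 = minn i (L.+1 - i)]) ->
 size (t::G) = size (t'::G') /\ forall d, (d < size (t::G) /\ nth x0 (t::G) d <> nth x0 (t'::G') d) <->
    exists i, [/\ 1 <= i <= L.+2, nth 0 (k :: rcons cM j) i.-1 <> nth 0 (k' :: rcons cM' j') i.-1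
               & d.+1 = minn i (L.+3 - i)].
Proof.
move=> sM sM' ht [sG IH]; split; first by rewrite /= sG.
case=> [|e] /=.
  split.
    case=> _ ne.
    case: (k =P k') => [ek|nk]; last first.
      by exists 1; split => //; lia.
    case: (j =P j') => [ej|nj]; first by exfalso; apply: ne; apply/ht.
    exists L.+2; split; [lia| |lia].
    by rewrite succnK -{1}sM -sM' !nth_last.
  case=> i [hi ne hd]; split => //.
  move/ht=> [ek ej]; apply: ne.
  have : i = 1 \/ i = L.+2 by lia.
  case=> ->; first by rewrite /= ek.
  by rewrite succnK -{1}sM -sM' !nth_last ej.
rewrite ltnS IH; split.
  case=> i [hi ne hd]; exists i.+1; split.
  - lia.
  - by rewrite /= nth_mid ?sM // nth_mid ?sM' //; lia.
  - lia.
case=> i [hi ne hd].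
have hi2 : 2 <= i <= L.+1 by lia.
exists i.-1; split.
- lia.
- move: ne; case: i hi hd hi2 => // i hi hd hi2 /=.
  rewrite nth_mid ?sM; last lia.
  rewrite nth_mid ?sM' //; lia.
- lia.
Qed.

Lemma expr_nil (X : eqType) : expr [::] [::] = ([::] : seq X).
Proof. by []. Qed.

Lemma head_expr (X : eqType) (b : seq X) c y : all (fun k => 0 < k) c -> size b = size c ->
  head y (expr b c) = head y b.
Proof. by case: b c => [|x b] [|[|k] c]. Qed.

Lemma last_expr (X : eqType) (b : seq X) c y : all (fun k => 0 < k) c -> size b = size c ->
  last y (expr b c) = last y b.
Proof.
elim: b c y => [|x b IH] [|k c] y //= /andP[hk hc] [hs].
rewrite expr_cons last_cat; case: k hk => // k _ /=.
by rewrite last_nseqx IH.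
Qed.

Lemma size_expr (X : eqType) (b : seq X) c : all (fun k => 0 < k) c -> size b = size c ->
  size b <= size (expr b c).
Proof.
elim: b c => [|x b IH] [|k c] //= /andP[hk hc] [hs].
rewrite expr_cons size_cat size_nseq; have := IH _ hc hs; lia.
Qed.

Lemma tok_eq2 (X : eqType) (x y : X) k j k' j' (p p' : nat) : x != y -> 0 < k -> 0 < k' ->
  ((nseq k x ++ nseq j y, p) = (nseq k' x ++ nseq j' y, p') <-> [/\ k = k', j = j' & p = p']).
Proof.
move=> xy hk hk'; split; last by case=> -> -> ->.
case=> e ->; have : lead_run_len (nseq k x ++ nseq j y) = lead_run_len (nseq k' x ++ nseq j' y) by rewrite e.
have hc : forall n, (nseq n y == [::]) || (head x (nseq n y) != x) by case=> //= n; rewrite eq_sym.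
rewrite !lead_nseq // => ek; subst k'; split => //.
by have := congr1 size e; rewrite !size_cat !size_nseq; lia.
Qed.

Lemma tok_eq3 (X : eqType) (x y : X) k j k' j' : 
  ((nseq k x ++ nseq j y, k) = (nseq k' x ++ nseq j' y, k') <-> k = k' /\ j = j').
Proof.
split; last by case=> -> ->.
case=> e ek; subst k'; split => //.
by have := congr1 size e; rewrite !size_cat !size_nseq; lia.
Qed.

Lemma key (S : eqType) n : forall n' (b : seq (hsym S)) c c' pre post pre' post',
 size b <= n.*2 -> size b <= n'.*2 -> rle_ok b c -> rle_ok b c' ->
 let F := flash_loop n (pre ++ expr b c ++ post) (size pre).+1 (size pre + size (expr b c)).+1 in
 let F' := flash_loop n' (pre' ++ expr b c' ++ post') (size pre').+1 (size pre' + size (expr b c')).+1 in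
 size F = size F' /\ forall d, (d < size F /\ nth ([::],0) F d <> nth ([::],0) F' d) <->
   exists i, [/\ 1 <= i <= size b, nth 0 c i.-1 <> nth 0 c' i.-1 & d.+1 = minn i ((size b).+1 - i)].
Proof.
elim: n => [|n IH] n' b c c' pre post pre' post' hb hb' [sc sb pc] [sc' _ pc']; cbv zeta.
all: case: b sc sc' sb hb hb' => [|x b1] sc sc' sb hb hb'.
1,3: (case: c sc pc => // _ _; case: c' sc' pc' => // _ _;
   rewrite expr_nil !addn0 !flash0; split => // d; split; [by case | by case=> i [] /andP[]; lia]).
  by [].
case: n' hb' => [|n'] hb'; first by [].
case: c sc pc => // k c1 sc pc; case: c' sc' pc' => // k' c1' sc' pc'.
have [hk pc1] : 0 < k /\ all (fun k => 0 < k) c1 by apply/andP; exact: pc.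
clear pc.
have [hk' pc1'] : 0 < k' /\ all (fun k => 0 < k) c1' by apply/andP; exact: pc'.
clear pc'.
case/lastP: b1 sc sc' sb hb hb' => [|bM y] sc sc' sb hb hb'.
  case: c1 sc pc1 => // _ _; case: c1' sc' pc1' => // _ _.
  rewrite !expr_cons !expr_nil !cats0 step1 // step1 //.
  split => // d; split.
    case; case: d => // _ /= ne; exists 1; split => //.
    by move=> /= e; apply: ne; rewrite e.
  case=> i [/= hi ne hd]; have ei : i = 1 by lia.
  subst i; have -> : d = 0 by lia.
  split => // -[e]; apply: ne => /=.
  by have := congr1 size e; rewrite !size_nseq.
case/lastP: c1 sc pc1 => [|cM j] sc pc1; first by rewrite /= size_rcons in sc.
case/lastP: c1' sc' pc1' => [|cM' j'] sc' pc1'; first by rewrite /= size_rcons in sc'.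
have scM : size cM = size bM by move: sc; rewrite /= !size_rcons; case.
have scM' : size cM' = size bM by move: sc'; rewrite /= !size_rcons; case.
rewrite all_rcons in pc1; case/andP: pc1 => hj pcM.
rewrite all_rcons in pc1'; case/andP: pc1' => hj' pcM'.
have : path (fun a b => a != b) x (rcons bM y) := sb.
rewrite rcons_path => /andP[pxb lxy].
rewrite !expr_cons !expr_rcons //.
rewrite [size (x :: _)]/= size_rcons.
have hbM : size bM <= n.*2 by move: hb; rewrite /= size_rcons; lia.
have hbM' : size bM <= n'.*2 by move: hb'; rewrite /= size_rcons; lia.
clear sc sc' hb hb' sb.
case: bM scM scM' pxb lxy hbM hbM' => [|z bM2] scM scM' pxb lxy hbM hbM'.
  case: cM scM pcM => // _ _; case: cM' scM' pcM' => // _ _.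
  rewrite expr_nil !cat0s step2 // step2 //.
  apply: (@comb _ _ _ _ _ _ k j k' j' [::] [::] 0) => //; first by rewrite tok_eq2 //; split; [case | case=> -> ->].
  split => // d; split; [by case | by case=> i [] /andP[]; lia].
set bM := z :: bM2.
have hu : 0 < size (expr bM cM) by have := @size_expr _ bM cM pcM (esym scM); rewrite /bM /=; lia.
have hu' : 0 < size (expr bM cM') by have := @size_expr _ bM cM' pcM' (esym scM'); rewrite /bM /=; lia.
have hl : last y (expr bM cM) != y by rewrite last_expr // -?scM.
have hl' : last y (expr bM cM') != y by rewrite last_expr // -?scM'.
have hh : head x (expr bM cM) != x.
  by rewrite head_expr // -?scM //; move: pxb => /= /andP[+ _]; rewrite eq_sym.
have hh' : head x (expr bM cM') != x.
  by rewrite head_expr // -?scM' //; move: pxb => /= /andP[+ _]; rewrite eq_sym.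
rewrite step3 // step3 //.
apply: (@comb _ _ _ _ _ _ k j k' j' cM cM' (size bM)) => //; first exact: tok_eq3.
have sbM : sorted (fun a b => a != b) bM := path_sorted pxb.
exact: (IH n' bM cM cM' _ _ _ _ hbM hbM').
Qed.

Lemma expr_map (S : eqType) (a : seq S) m : size a = size m ->
  expr (map sym a) m = map sym (expr a m).
Proof.
elim: a m => [|x a IH] [|k m] //= [h].
by rewrite !expr_cons map_cat map_nseq IH.
Qed.

Lemma shat_expr (S : eqType) (a : seq S) m : size m = size a ->
  shat (rle_string a m) = expr (sym_at :: rcons (map sym a) sym_dollar) (1 :: rcons m 1).
Proof.
move=> h; rewrite expr_cons expr_rcons ?size_map // expr_map // /shat -cats1.
by [].
Qed.

Lemma rle_ok_ext (S : eqType) (a : seq S) m : rle_ok a m ->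
  rle_ok (sym_at :: rcons (map sym a) sym_dollar) (1 :: rcons m 1).
Proof.
case=> sm sa pm; split.
- by rewrite /= !size_rcons size_map sm.
- rewrite /sorted rcons_path; apply/andP; split.
    case: a sa {sm} => [|a0 a1] sa //=; rewrite path_map.
    by rewrite -(@eq_path _ (fun u v => u != v)).
  by case: a {sa sm} => [|a0 a1] //=; rewrite last_map.
- by rewrite /= all_rcons pm.
Qed.

Lemma flash_expr (S : eqType) (s : seq S) B C : shat s = expr B C ->
  flashback s = flash_loop (size s).+3 ([::] ++ expr B C ++ [::]) (size ([::] : seq (hsym S))).+1
     (size ([::] : seq (hsym S)) + size (expr B C)).+1.
Proof.
move=> E; rewrite /flashback cats0 cat0s -E.
by rewrite /shat /= size_rcons size_map.
Qed.

Theorem proposition6p8 (S : eqType) (a : seq S) (m m' : seq nat) :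
  0 < size a -> rle_ok a m -> rle_ok a m' ->
  let r := size a in
  let F := flashback (rle_string a m) in
  let F' := flashback (rle_string a m') in
  size F = size F' /\
  (forall d : nat,
     (d < size F /\ nth ([::], 0) F d <> nth ([::], 0) F' d) <->
     (exists i : nat, [/\ 1 <= i <= r, nth 0 m i.-1 <> nth 0 m' i.-1
                        & d = minn i (r.+1 - i)])).
Proof.
move=> ha ok ok'; cbv zeta.
have [sm _ pm] := ok; have [sm' _ pm'] := ok'.
rewrite (@flash_expr _ _ _ _ (@shat_expr _ _ _ sm)) (@flash_expr _ _ _ _ (@shat_expr _ _ _ sm')).
have hs : size a <= size (rle_string a m) by exact: (@size_expr _ a m pm (esym sm)).
have hs' : size a <= size (rle_string a m') by exact: (@size_expr _ a m' pm' (esym sm')).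
set B := sym_at :: rcons (map sym a) sym_dollar.
have sB : size B = (size a).+2 by rewrite /B /= size_rcons size_map.
have hb : size B <= (size (rle_string a m)).+3.*2 by rewrite sB; lia.
have hb' : size B <= (size (rle_string a m')).+3.*2 by rewrite sB; lia.
have [eS K] := @key S _ _ _ _ _ [::] [::] [::] [::] hb hb' (@rle_ok_ext _ _ _ ok) (@rle_ok_ext _ _ _ ok').
split => // d; rewrite K sB; clear K eS hb hb'.
split.
  case=> i [hi ne hd].
  have hi0 : i != 1 by apply/eqP => ei; apply: ne; rewrite ei.
  have hi1 : i != (size a).+2.
    apply/eqP => ei; apply: ne; rewrite ei succnK.
    have nl : forall (k j : nat) c, size c = size a -> nth 0 (k :: rcons c j) (size a).+1 = j.
      by move=> k j c <-; rewrite nth_last.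
    by rewrite !nl.
  exists i.-1; split; [lia| |lia].
  move: ne; case: i hi hd hi0 hi1 => // i hi hd hi0 hi1 /=.
  rewrite nth_mid ?sm; last lia.
  rewrite nth_mid ?sm' //; lia.
case=> i [hi ne hd]; exists i.+1; split; [lia| |lia].
by rewrite /= nth_mid ?sm // nth_mid ?sm' //; lia.
Qed.
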